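(* Let $G:[0,\nu)\to[0,\infty)$ be increasing with $G(0)=0$ and range $[0,\infty)$, and suppose that for every $c>0$ the function $x\mapsto G^{-1}(G(x)+G(c))$ is concave on $[0,\nu)$. Let $f$ be convex on $[0,\infty)$ with $f(1)=0$ and $\mathsf{D_m}(f)\le\nu$. Assume that $G(D_f(q_Yq_Z\|r_Yr_Z))\le G(D_f(q_Y\|r_Y))+G(D_f(q_Z\|r_Z))$ holds for all distributions $q_Y\ll r_Y$ on $\mathcal{Y}$ and $q_Z\ll r_Z$ on $\mathcal{Z}$ whenever $|\mathcal{Y}|=|\mathcal{Z}|=2$. Then this inequality holds for all distributions $q_Y\ll r_Y$, $q_Z\ll r_Z$ on finite alphabets $\mathcal{Y},\mathcal{Z}$ of arbitrary size.
   Context: For distributions $p\ll q$ on a finite set, $D_f(p\|q)=\sum_x q(x) f(p(x)/q(x))$ with $0f(0/0)=0$; $\mathsf{D_m}(f)=f(0)+\lim_{t\to\infty}f(t)/t$. *)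

(* Defs.v *)
From HB Require Import structures.
From mathcomp Require Import all_boot all_order all_algebra.
From mathcomp Require Import all_classical all_reals all_analysis.
Set Implicit Arguments. Unset Strict Implicit. Unset Printing Implicit Defensive.
Import Order.TTheory GRing.Theory Num.Theory.
Local Open Scope classical_set_scope.
Local Open Scope ring_scope.

Section Defs.
Variable R : realType.

Definition convex_on (D : set R) (h : R -> R) : Prop :=
  forall x y t, D x -> D y -> 0 <= t -> t <= 1 ->
    h (t * x + (1 - t) * y) <= t * h x + (1 - t) * h y.

Definition concave_on (D : set R) (h : R -> R) : Prop :=
  forall x y t, D x -> D y -> 0 <= t -> t <= 1 ->
    t * h x + (1 - t) * h y <= h (t * x + (1 - t) * y).

Definition dom0 (nu : \bar R) : set R := fun x => 0 <= x /\ (x%:E < nu)%E.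

(* the inverse of G on [0, nu) (unique preimage when G is strictly increasing) *)
Definition Ginv (G : R -> R) (nu : \bar R) (y : R) : R :=
  xget 0 (fun x => dom0 nu x /\ G x = y).

Definition is_dist (T : finType) (p : T -> R) : Prop :=
  (forall x, 0 <= p x) /\ \sum_(x : T) p x = 1.

Definition abs_cont (T : finType) (p q : T -> R) : Prop :=
  forall x, q x = 0 -> p x = 0.

(* f-divergence D_f(p||q) = sum_x q(x) f(p(x)/q(x)); for p << q the terms
   with q x = 0 vanish (0 * _ = 0), matching the convention 0 f(0/0) = 0 *)
Definition Df (f : R -> R) (T : finType) (p q : T -> R) : R :=
  \sum_(x : T) q x * f (p x / q x).

Definition prod_dist (Y Z : finType) (p : Y -> R) (q : Z -> R) : Y * Z -> R :=
  fun yz => p yz.1 * q yz.2.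

Definition Dm (f : R -> R) : \bar R :=
  ((f 0)%:E + lim ((f t / t)%:E @[t --> +oo%R]))%E.

End Defs.

(* Main.v *)
Require Import Defs.
From HB Require Import structures.
From mathcomp Require Import all_boot all_order all_algebra.
From mathcomp Require Import all_classical all_reals all_analysis.
From mathcomp Require Import ring lra.
Import Order.TTheory GRing.Theory Num.Theory.
Local Open Scope classical_set_scope.
Local Open Scope ring_scope.

Lemma sum_zero_case (R : realType) (Y : finType) (r X : Y -> R) :
  (forall y, 0 <= r y) -> \sum_y r y = 0 -> \sum_y r y * X y = 0.
Proof.
move=> r0 s0; apply: big1 => y _.
by rewrite (psumr_eq0P (fun i _ => r0 i) s0) ?mul0r.
Qed.

Lemma sum_lt1 (R : realType) (Y : finType) (F G : Y -> R) (i : Y) :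
  (forall y, F y <= G y) -> F i < G i -> \sum_y F y < \sum_y G y.
Proof.
move=> FG Fi; rewrite (bigD1 i) //= [X in _ < X](bigD1 i) //=.
by apply: ltr_leD => //; apply: ler_sum => y _.
Qed.

Lemma sum_ind (R : realType) (Y : finType) (i : Y) (c : R) (X : Y -> R) :
  \sum_y (if y == i then c else 0) * X y = c * X i.
Proof.
rewrite (bigD1 i) //= eqxx big1 ?addr0 // => y /negbTE ->; by rewrite mul0r.
Qed.

Lemma sum_ind0 (R : realType) (Y : finType) (i : Y) (c : R) :
  \sum_y (if y == i then c else 0) = c.
Proof.
rewrite (bigD1 i) //= eqxx big1 ?addr0 // => y /negbTE -> //.
Qed.

Lemma claim (R : realType) (Y : finType) (D : set R) (g phi Psi : R -> R)
 (Hconc : concave_on D Psi)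
 (HP : forall l a b, 0 <= l -> l <= 1 -> 0 <= a -> 0 <= b -> l*a + (1-l)*b = 1 ->
     l * phi a + (1-l) * phi b <= Psi (l * g a + (1-l) * g b))
 (HD2 : forall l a b, 0 <= l -> l <= 1 -> 0 <= a -> 0 <= b -> l*a + (1-l)*b = 1 ->
     D (l * g a + (1-l) * g b))
 (HD : forall r t : Y -> R, (forall y, 0 <= r y) -> (forall y, 0 <= t y) ->
     \sum_y r y * t y = \sum_y r y -> D ((\sum_y r y * g (t y)) / \sum_y r y)) :
 forall r t : Y -> R, (forall y, 0 <= r y) -> (forall y, 0 <= t y) ->
   \sum_y r y * t y = \sum_y r y ->
   \sum_y r y * phi (t y) <= (\sum_y r y) * Psi ((\sum_y r y * g (t y)) / \sum_y r y).
Proof.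
suff H : forall n (r t : Y -> R), (#|[pred y | r y != 0%R]| <= n)%N ->
   (forall y, 0 <= r y) -> (forall y, 0 <= t y) ->
   \sum_y r y * t y = \sum_y r y ->
   \sum_y r y * phi (t y) <= (\sum_y r y) * Psi ((\sum_y r y * g (t y)) / \sum_y r y).
  by move=> r t; apply: H (leqnn _).
elim=> [|n IH] r t Hn r0 t0 Hm.
  have rz : forall y, r y = 0.
    move=> y; have := card0_eq (eqP (etrans (esym (leqn0 _)) Hn)) y.
    by rewrite !inE => /negbFE/eqP.
  have -> : \sum_y r y = 0 by apply: big1 => y _; rewrite rz.
  by rewrite mul0r big1 // => y _; rewrite rz mul0r.
have m0 : 0 <= \sum_y r y by apply: sumr_ge0.
have [mz|mnz] := eqVneq (\sum_y r y) 0.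
  by rewrite mz mul0r sum_zero_case.
have mpos : 0 < \sum_y r y by rewrite lt0r mnz.
set m := \sum_y r y in m0 mnz mpos Hm *.
have Hsum1 : \sum_y r y * (t y - 1) = 0.
  under eq_bigr do rewrite mulrBr mulr1.
  by rewrite sumrB Hm subrr.
case: (pselect (exists i, r i != 0 /\ t i < 1)) => [[i [ri ti]] | Hno].

  have rip : 0 < r i by rewrite lt0r ri r0.
  have [j [rj tj]] : exists j, r j != 0 /\ 1 < t j.
    case: (pselect (exists j, r j != 0 /\ 1 < t j)) => // Hnj; exfalso.
    have : \sum_y r y * (t y - 1) < \sum_(y : Y) (0:R).
      apply: (@sum_lt1 _ _ _ _ i).
        move=> y; have [->|ry] := eqVneq (r y) 0; first by rewrite mul0r.
        rewrite mulr_ge0_le0 // subr_le0 leNgt; apply/negP => ty.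
        by apply: Hnj; exists y.
      by rewrite pmulr_rlt0 // subr_lt0.
    by rewrite Hsum1 big1 // ltxx.
  have ij : i != j.
    by apply/eqP => eij; move: (lt_trans ti tj); rewrite eij ltxx.
  set a := t j - 1; set b := 1 - t i.
  have a0 : 0 < a by rewrite /a subr_gt0.
  have b0 : 0 < b by rewrite /b subr_gt0.
  set s := Num.min (r i / a) (r j / b).
  have [sle1 sle2 sor] : [/\ s <= r i / a, s <= r j / b &
                           s = r i / a \/ s = r j / b].
    rewrite /s; have [h|h] := leP (r i / a) (r j / b).
        by split => //; left.
    by split => //; [apply: ltW | right].
  have rjp : 0 < r j by rewrite lt0r rj r0.
  have s0 : 0 < s.
    by case: sor => ->; apply: divr_gt0.
  have sa_le : s * a <= r i by rewrite -ler_pdivlMr.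
  have sb_le : s * b <= r j by rewrite -ler_pdivlMr.
  pose r' := fun y => r y - (if y == i then s * a else 0)
                         - (if y == j then s * b else 0).
  have Hsr' : forall X : Y -> R, \sum_y r' y * X y =
        \sum_y r y * X y - s * a * X i - s * b * X j.
    move=> X; rewrite /r'; under eq_bigr do rewrite !mulrBl.
    by rewrite !sumrB !sum_ind.
  have Hm1 : \sum_y r' y = m - s * a - s * b.
    by rewrite /r' !sumrB !sum_ind0.
  have r'0 : forall y, 0 <= r' y.
    move=> y; rewrite /r' /=; have [->|yi] := eqVneq y i.
      by rewrite (negbTE ij) subr0 subr_ge0.
    have [->|yj] := eqVneq y j; first by rewrite subr0 subr_ge0.
    by rewrite !subr0.
  have Hm' : \sum_y r' y * t y = \sum_y r' y.
    by rewrite Hsr' Hm1 Hm /a /b; ring.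
  have Hcard : (#|[pred y | r' y != 0%R]| <= n)%N.
    have : [pred y | r' y != 0%R] \proper [pred y | r y != 0%R].
      apply/properP; split.
        apply/fintype.subsetP => y; rewrite !inE; apply: contra => /eqP ry.
        have yi : y != i by apply/eqP => e; move: ri; rewrite -e ry eqxx.
        have yj : y != j by apply/eqP => e; move: rj; rewrite -e ry eqxx.
        by rewrite /r' (negbTE yi) (negbTE yj) ry !subr0.
      case: sor => es.
        exists i; rewrite !inE //.
        by rewrite negbK /r' /= eqxx (negbTE ij) es (divfK (lt0r_neq0 a0)) subrr subr0.
      exists j; rewrite !inE //.
      have ji : j != i by rewrite eq_sym.
      by rewrite negbK /r' /= eqxx (negbTE ji) es (divfK (lt0r_neq0 b0)) subr0 subrr.
    move/proper_card => h; rewrite -ltnS; exact: leq_trans h Hn.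
  have IHr := IH r' t Hcard r'0 t0 Hm'.

  have d0 : 0 < a + b by rewrite addr_gt0.
  have dn0 : a + b != 0 by rewrite lt0r_neq0.
  have mn0 : m != 0 by [].
  set m' := \sum_y r' y in IHr Hm1 Hm'.
  set F' := \sum_y r' y * g (t y) in IHr.
  pose l := a / (a + b).
  have e1l : 1 - l = b / (a + b) by rewrite /l; field.
  have l0 : 0 <= l by rewrite /l divr_ge0 // ltW.
  have l1 : l <= 1 by rewrite /l ler_pdivrMr // mul1r lerDl ltW.
  have dd : a * t i + b * t j = a + b by rewrite /a /b; ring.
  have lcomb : l * t i + (1 - l) * t j = 1.
    rewrite e1l /l -dd; field; by rewrite dd.
  have HPij := HP l (t i) (t j) l0 l1 (t0 i) (t0 j) lcomb.
  have DA := HD2 l (t i) (t j) l0 l1 (t0 i) (t0 j) lcomb.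
  have DB : D (F' / m') := HD r' t r'0 t0 Hm'.
  set A := l * g (t i) + (1 - l) * g (t j) in HPij DA.
  have m'eq : m' = m - s * (a + b) by rewrite Hm1; ring.
  have m'0 : 0 <= m' by apply: sumr_ge0.
  pose tau := s * (a + b) / m.
  have tau0 : 0 <= tau by rewrite /tau divr_ge0 // mulr_ge0 // ltW.
  have tau1 : tau <= 1.
    by rewrite /tau ler_pdivrMr // mul1r -subr_ge0 -m'eq.
  have Hc := Hconc A (F' / m') tau DA DB tau0 tau1.
  have E1 : \sum_y r y * phi (t y) =
      \sum_y r' y * phi (t y) + s * (a + b) * (l * phi (t i) + (1 - l) * phi (t j)).
    by rewrite (Hsr' (fun y => phi (t y))) e1l /l; field.
  have hm'B : m' * (F' / m') = F'.
    have [mz|mnz'] := eqVneq m' 0.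
      by rewrite mz mul0r /F' sum_zero_case.
    by rewrite mulrCA divff // mulr1.
  have HS : \sum_y r y * g (t y) = F' + s * a * g (t i) + s * b * g (t j).
    by rewrite /F' (Hsr' (fun y => g (t y))); ring.
  have e1t : 1 - tau = m' / m by rewrite m'eq /tau; field.
  have E2 : (\sum_y r y * g (t y)) / m = tau * A + (1 - tau) * (F' / m').
    rewrite e1t [(m' / m) * _]mulrAC hm'B HS /tau /A e1l /l; field; by rewrite mnz dn0.
  rewrite E1 E2.
  have sd0 : 0 <= s * (a + b) by rewrite mulr_ge0 // ltW.
  have step1 : \sum_y r' y * phi (t y) + s * (a + b) * (l * phi (t i) + (1 - l) * phi (t j))
      <= m' * Psi (F' / m') + s * (a + b) * Psi A.
    by apply: lerD => //; apply: ler_wpM2l.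
  have h1 : m * tau = s * (a + b) by rewrite /tau mulrC divfK.
  have h2 : m * (1 - tau) = m' by rewrite e1t mulrC divfK.
  have step2 : m' * Psi (F' / m') + s * (a + b) * Psi A
      = m * (tau * Psi A + (1 - tau) * Psi (F' / m')).
    by rewrite [RHS]mulrDr [m * (tau * _)]mulrA [m * ((1 - tau) * _)]mulrA h1 h2 addrC.
  apply: le_trans step1 _; rewrite step2.
  by apply: ler_wpM2l.
have Hy : forall y, r y * (t y - 1) = 0.
  move=> y; apply: (psumr_eq0P _ Hsum1) => // z _.
  have [->|rz] := eqVneq (r z) 0; first by rewrite mul0r.
  rewrite mulr_ge0 // subr_ge0; rewrite leNgt; apply/negP => tz.
  by apply: Hno; exists z.
have Ht : forall (X : R -> R) y, r y * X (t y) = r y * X 1.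
  move=> X y; have := Hy y; move/eqP; rewrite mulf_eq0 => /orP [/eqP ->|].
    by rewrite !mul0r.
  by rewrite subr_eq0 => /eqP ->.
under eq_bigr do rewrite (Ht phi).
under [X in Psi (X / _)]eq_bigr do rewrite (Ht g).
rewrite -!mulr_suml -/m mulrAC divff // mul1r.
rewrite ler_wpM2l //.
have := HP 1 1 1 ler01 (lexx _) ler01 ler01.
by rewrite subrr !mul0r !addr0 !mul1r; apply.
Qed.
Lemma slope_mono (R : realType) (f : R -> R)
  (f_cvx : convex_on (fun t => 0 <= t) f) (s t : R) :
  0 < s -> s <= t -> (f s - f 0) / s <= (f t - f 0) / t.
Proof.
move=> s0 st; have t0 : 0 < t by apply: lt_le_trans st.
pose u := s / t.
have u0 : 0 <= u by rewrite divr_ge0 // ltW.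
have u1 : u <= 1 by rewrite ler_pdivrMr // mul1r.
have := f_cvx t 0 u (ltW t0) (lexx 0) u0 u1.
rewrite mulr0 addr0 /u divfK ?lt0r_neq0 // => H.
rewrite ler_pdivrMr // mulrAC ler_pdivlMr //.
have : f s - f 0 <= s / t * (f t - f 0) by lra.
move=> H2; have := ler_wpM2r (ltW t0) H2.
have -> : s / t * (f t - f 0) * t = (f t - f 0) * s.
  by field; rewrite lt0r_neq0.
done.
Qed.

Lemma f_upper (R : realType) (f : R -> R)
  (f_cvx : convex_on (fun t => 0 <= t) f) (nu : R)
  (Dm_le : (Dm f <= nu%:E)%E) :
  forall t, 0 <= t -> f t <= f 0 + (nu - f 0) * t.
Proof.
pose sl := fun t : R => (f t - f 0) / t.
pose h := fun t : R => if t <= 1 then sl 1 else sl t.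
have hmono : forall x y, x <= y -> h x <= h y.
  move=> x y xy; rewrite /h.
  case: (lerP x 1) => x1; case: (lerP y 1) => y1 //.
  - by apply: slope_mono => //; apply: ltW.
  - by move: (lt_le_trans x1 (le_trans xy y1)); rewrite ltxx.
  - by apply: slope_mono => //; apply: (lt_trans ltr01).
have cv1 : ((h t)%:E @[t --> +oo]) --> ereal_sup (range (fun t => (h t)%:E)).
  by apply: nondecreasing_cvge => x y xy; rewrite lee_fin hmono.
have cv2 : ((f 0 * t^-1)%:E @[t --> +oo]) --> (0:R)%:E.
  apply: cvg_EFin; first by near=> t.
  have hinv : ((t : R)^-1 @[t --> +oo] --> 0).
    apply/(@gtr0_cvgV0 _ _ _ _ id); first by near=> t.
    exact: cvg_id.
  have := @cvgMr _ _ _ _ _ (f 0) _ hinv; rewrite mulr0; apply.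
set l := ereal_sup _ in cv1.
have cv3 : ((f t / t)%:E @[t --> +oo]) --> (l + (0:R)%:E)%E.
  apply: cvg_trans (cvgeD _ cv1 cv2); last by apply: fin_num_adde_defl.
  apply: near_eq_cvg; near=> t.
  have t1 : 1 < t by near: t; apply: nbhs_pinfty_gt; rewrite num_real.
  rewrite /h leNgt t1 /= /sl -EFinD; congr (_%:E).
  rewrite mulrBl addrNK //.
have limE : lim ((f t / t)%:E @[t --> +oo]) = l by rewrite (cvg_lim _ cv3) ?adde0.
move=> t; rewrite le0r => /orP [/eqP ->|t0].
  by rewrite mulr0 addr0.
have ht : ((h (t + 1))%:E <= l)%E by apply: ereal_sup_ubound; exists (t + 1).
have : ((f 0 + h (t + 1))%:E <= nu%:E)%E.
  apply: le_trans Dm_le; rewrite /Dm limE EFinD; exact: leeD2l.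
rewrite lee_fin /h. have -> : (t + 1 <= 1) = false by apply/negbTE; rewrite -ltNge ltrDr.
move=> H.
have : sl t <= sl (t + 1) by apply: slope_mono => //; rewrite lerDl.
rewrite /sl => H2.
have H3 : (f t - f 0) / t <= nu - f 0 by rewrite (le_trans H2) // lerBrDl.
by move: H3; rewrite ler_pdivrMr // -lerBlDl mulrC.
Unshelve. all: by end_near.
Qed.

Lemma jensen0 (R : realType) (f : R -> R)
  (f_cvx : convex_on (fun t => 0 <= t) f) (f1 : f 1 = 0)
  (Y : finType) (r t : Y -> R) :
  (forall y, 0 <= r y) -> (forall y, 0 <= t y) ->
  \sum_y r y * t y = \sum_y r y -> 0 <= \sum_y r y * f (t y).
Proof.
move=> r0 t0 Hm.
have H : \sum_y r y * - f (t y) <= (\sum_y r y) * 0.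
  have := @claim R Y setT f (fun x => - f x) (fun _ => 0).
  move=> /(_ _ _ _ _ r t r0 t0 Hm); rewrite mulr0; apply => //.
  - by move=> x y u _ _ _ _; rewrite !mulr0 addr0.
  - move=> l a b l0 l1 a0 b0 e.
    have := f_cvx a b l a0 b0 l0 l1; rewrite e f1 => H.
    by rewrite !mulrN -opprD oppr_le0.
move: H; rewrite mulr0.
under eq_bigr do rewrite mulrN.
by rewrite sumrN oppr_le0.
Qed.

Lemma f_strict (R : realType) (f : R -> R)
  (f_cvx : convex_on (fun t => 0 <= t) f) (f1 : f 1 = 0) (nu : R)
  (nu0 : 0 < nu) (Dm_le : (Dm f <= nu%:E)%E) (b : R) :
  1 <= b -> f b < f 0 + (nu - f 0) * b.
Proof.
move=> b1; have b0 : 0 < b by apply: lt_le_trans b1.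
rewrite ltNge; apply/negP => H.
have U := @f_upper R f f_cvx nu Dm_le (b + 1) (ltW (ltr_wpDl (ltW b0) ltr01)).
pose mu := b^-1.
have mu0 : 0 < mu by rewrite /mu invr_gt0.
have mu1 : mu <= 1 by rewrite /mu invf_le1.
have e : mu * 1 + (1 - mu) * (b + 1) = b.
  by rewrite /mu; field; rewrite lt0r_neq0.
have C := f_cvx 1 (b + 1) mu ler01 (ltW (ltr_wpDl (ltW b0) ltr01)) (ltW mu0) mu1.
rewrite e f1 mulr0 add0r in C.
have U2 := ler_wpM2l (eqbRL (subr_ge0 _ _) mu1) U.
have E : (1 - mu) * (f 0 + (nu - f 0) * (b + 1)) = f 0 + (nu - f 0) * b - mu * nu.
  by rewrite /mu; field; rewrite lt0r_neq0.
rewrite E in U2.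
have P : 0 < mu * nu by rewrite mulr_gt0.
lra.
Qed.

Lemma Df_dom (R : realType) (nu : \bar R) (f : R -> R)
  (f_cvx : convex_on (fun t => 0 <= t) f) (f1 : f 1 = 0)
  (nu_gt0 : (0 < nu)%E) (Dm_le : (Dm f <= nu)%E)
  (Y : finType) (r t : Y -> R) :
  (forall y, 0 <= r y) -> (forall y, 0 <= t y) ->
  \sum_y r y * t y = \sum_y r y ->
  dom0 nu ((\sum_y r y * f (t y)) / \sum_y r y).
Proof.
move=> r0 t0 Hm; split.
  by apply: divr_ge0; [apply: (@jensen0 R f f_cvx f1 Y r t r0 t0 Hm) | apply: sumr_ge0].
case: nu nu_gt0 Dm_le => [nu| |] //= nu0 Dmle; last by rewrite ltry.
rewrite lte_fin; rewrite lte_fin in nu0.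
have [mz|mnz] := eqVneq (\sum_y r y) 0.
  by rewrite mz invr0 mulr0.
have mpos : 0 < \sum_y r y by rewrite lt0r mnz sumr_ge0.
rewrite ltr_pdivrMr //.
have [y0 [ry0 ty0]] : exists y0, r y0 != 0 /\ 1 <= t y0.
  case: (pselect (exists y0, r y0 != 0 /\ 1 <= t y0)) => // Hn; exfalso.
  have [y1 ry1] : exists y1, r y1 != 0.
    case: (pselect (exists y1, r y1 != 0)) => // Hn1; exfalso.
    move/eqP: mnz; apply; apply: big1 => y _.
    by apply/eqP; apply/negP => /negP ry; apply: Hn1; exists y.
  have ty : forall y, r y != 0 -> t y < 1.
    move=> y ry; rewrite ltNge; apply/negP => ty; apply: Hn; by exists y.
  have : \sum_y r y * t y < \sum_y r y * 1.
    apply: (@sum_lt1 _ _ _ _ y1).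
      move=> y; have [->|ry] := eqVneq (r y) 0; first by rewrite !mul0r.
      by rewrite ler_wpM2l // ltW // ty.
    by rewrite ltr_pM2l ?ty // lt0r ry1 r0.
  by under [X in _ < X]eq_bigr do rewrite mulr1; rewrite Hm ltxx.
have L : forall y, r y * f (t y) <= r y * (f 0 + (nu - f 0) * t y).
  by move=> y; rewrite ler_wpM2l // (@f_upper R f f_cvx nu Dmle).
apply: (@lt_le_trans _ _ (\sum_y r y * (f 0 + (nu - f 0) * t y))).
  apply: (@sum_lt1 _ _ _ _ y0) => //.
  rewrite ltr_pM2l ?lt0r ?ry0 ?r0 //.
  exact: (@f_strict R f f_cvx f1 nu nu0 Dmle).
under [X in X <= _]eq_bigr do rewrite mulrDr mulrCA.
rewrite big_split /= -mulr_suml -mulr_sumr Hm.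
by rewrite le_eqVlt; apply/orP; left; apply/eqP; ring.
Qed.

Set Implicit Arguments.

Lemma Ginv_spec (R : realType) (nu : \bar R) (G : R -> R)
  (G_onto : forall y, 0 <= y -> exists x, dom0 nu x /\ G x = y) (y : R) :
  0 <= y -> dom0 nu (Ginv G nu y) /\ G (Ginv G nu y) = y.
Proof. by move=> y0; exact: (@xgetPex R 0 (fun x => dom0 nu x /\ G x = y) (G_onto y y0)). Qed.

Lemma G_mono (R : realType) (nu : \bar R) (G : R -> R)
  (G_incr : forall x y, dom0 nu x -> dom0 nu y -> x < y -> G x < G y) x y :
  dom0 nu x -> dom0 nu y -> x <= y -> G x <= G y.
Proof.
move=> dx dy; rewrite le_eqVlt => /orP [/eqP ->//|xy].
by apply: ltW; apply: G_incr.
Qed.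

Lemma G_refl (R : realType) (nu : \bar R) (G : R -> R)
  (G_incr : forall x y, dom0 nu x -> dom0 nu y -> x < y -> G x < G y) x y :
  dom0 nu x -> dom0 nu y -> G x <= G y -> x <= y.
Proof.
move=> dx dy Gxy; rewrite leNgt; apply/negP => yx.
by move: (le_lt_trans Gxy (G_incr _ _ dy dx yx)); rewrite ltxx.
Qed.

Lemma dom0_convex (R : realType) (nu : \bar R) x y u :
  dom0 nu x -> dom0 nu y -> 0 <= u -> u <= 1 -> dom0 nu (u * x + (1 - u) * y).
Proof.
move=> [x0 xn] [y0 yn] u0 u1; split.
  by rewrite addr_ge0 // mulr_ge0 // subr_ge0.
case: nu xn yn => [nu| |] xn yn; [| by rewrite ltry | by []].
move: xn yn; rewrite !lte_fin => xn yn.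
have [->|uz] := eqVneq u 0; first by rewrite mul0r add0r subr0 mul1r.
have up : 0 < u by rewrite lt0r uz.
have : u * x < u * nu by rewrite ltr_pM2l.
have : (1 - u) * y <= (1 - u) * nu by rewrite ler_wpM2l ?subr_ge0 // ltW.
lra.
Qed.

Lemma Psi_conc (R : realType) (nu : \bar R) (G : R -> R)
  (G0 : G 0 = 0)
  (G_incr : forall x y, dom0 nu x -> dom0 nu y -> x < y -> G x < G y)
  (G_ge0 : forall x, dom0 nu x -> 0 <= G x)
  (G_onto : forall y, 0 <= y -> exists x, dom0 nu x /\ G x = y)
  (G_conc : forall c, 0 < c -> dom0 nu c ->
     concave_on (dom0 nu) (fun x => Ginv G nu (G x + G c))) (c : R) :
  dom0 nu c -> concave_on (dom0 nu) (fun x => Ginv G nu (G x + G c)).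
Proof.
move=> dc; have [cz|cnz] := eqVneq c 0; last first.
  by apply: G_conc => //; rewrite lt0r cnz; case: dc.
have GinvG : forall x, dom0 nu x -> Ginv G nu (G x) = x.
  move=> x dx; have [dz Gz] := @Ginv_spec R nu G G_onto _ (G_ge0 _ dx).
  apply/eqP; rewrite eq_le; apply/andP; split.
    by apply: (@G_refl R nu G G_incr) => //; rewrite Gz.
  by apply: (@G_refl R nu G G_incr) => //; rewrite Gz.
move=> x y u dx dy u0 u1; rewrite cz G0 !addr0 !GinvG //.
exact: dom0_convex.
Qed.

Lemma Psi_conv (R : realType) (nu : \bar R) (G : R -> R)
  (G_incr : forall x y, dom0 nu x -> dom0 nu y -> x < y -> G x < G y)
  (G_ge0 : forall x, dom0 nu x -> 0 <= G x)
  (G_onto : forall y, 0 <= y -> exists x, dom0 nu x /\ G x = y) x c y :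
  dom0 nu x -> dom0 nu c -> dom0 nu y ->
  (G y <= G x + G c <-> y <= Ginv G nu (G x + G c)).
Proof.
move=> dx dc dy.
have [dz Gz] := @Ginv_spec R nu G G_onto _ (addr_ge0 (G_ge0 _ dx) (G_ge0 _ dc)).
split => H.
  by apply: (@G_refl R nu G G_incr) => //; rewrite Gz.
by rewrite -Gz; apply: (@G_mono R nu G G_incr).
Qed.

Lemma sum_rt (R : realType) (Y : finType) (q r : Y -> R) :
  abs_cont q r -> \sum_y r y * (q y / r y) = \sum_y q y.
Proof.
move=> ac; apply: eq_bigr => y _.
have [rz|rnz] := eqVneq (r y) 0; first by rewrite rz (ac y rz) mul0r.
by rewrite mulrCA divff // mulr1.
Qed.

Lemma prod_is_dist (R : realType) (Y Z : finType) (p : Y -> R) (q : Z -> R) :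
  is_dist p -> is_dist q -> is_dist (prod_dist p q).
Proof.
move=> [p0 p1] [q0 q1]; split; first by move=> x; rewrite /prod_dist mulr_ge0.
rewrite /prod_dist -(pair_bigA _ (fun y z => p y * q z)) /=.
by rewrite -big_distrlr /= p1 q1 mulr1.
Qed.

Lemma prod_abs (R : realType) (Y Z : finType) (qY rY : Y -> R) (qZ rZ : Z -> R) :
  abs_cont qY rY -> abs_cont qZ rZ ->
  abs_cont (prod_dist qY qZ) (prod_dist rY rZ).
Proof.
move=> aY aZ [y z]; rewrite /prod_dist /= => /eqP; rewrite mulf_eq0.
by case/orP => /eqP h; [rewrite (aY _ h) mul0r | rewrite (aZ _ h) mulr0].
Qed.

Lemma Df_dom_dist (R : realType) (nu : \bar R) (f : R -> R)
  (f_cvx : convex_on (fun t => 0 <= t) f) (f1 : f 1 = 0)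
  (nu_gt0 : (0 < nu)%E) (Dm_le : (Dm f <= nu)%E)
  (Y : finType) (q r : Y -> R) :
  is_dist q -> is_dist r -> abs_cont q r -> dom0 nu (Df f q r).
Proof.
move=> [q0 q1] [r0 r1] ac.
have := @Df_dom R nu f f_cvx f1 nu_gt0 Dm_le Y r (fun y => q y / r y) r0
  (fun y => divr_ge0 (q0 y) (r0 y)).
by rewrite sum_rt // q1 r1 divr1; apply.
Qed.

Lemma Df_prod (R : realType) (f : R -> R) (Y Z : finType)
  (qY rY : Y -> R) (qZ rZ : Z -> R) :
  Df f (prod_dist qY qZ) (prod_dist rY rZ) =
  \sum_y rY y * \sum_z rZ z * f (qY y / rY y * (qZ z / rZ z)).
Proof.
rewrite /Df /prod_dist.
rewrite -(pair_bigA _ (fun y z => rY y * rZ z * f (qY y * qZ z / (rY y * rZ z)))) /=.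
apply: eq_bigr => y _; rewrite mulr_sumr; apply: eq_bigr => z _.
by rewrite -mulrA invfM [qY y * qZ z * _]mulrACA.
Qed.

Lemma Df_prod2 (R : realType) (f : R -> R) (Y Z : finType)
  (qY rY : Y -> R) (qZ rZ : Z -> R) :
  Df f (prod_dist qY qZ) (prod_dist rY rZ) =
  \sum_z rZ z * \sum_y rY y * f (qY y / rY y * (qZ z / rZ z)).
Proof.
rewrite Df_prod; under eq_bigr do rewrite mulr_sumr.
rewrite exchange_big /=; apply: eq_bigr => z _; rewrite mulr_sumr.
by apply: eq_bigr => y _; rewrite mulrCA.
Qed.

Lemma mul_h_div (R : realType) (h : R -> R) (x a : R) :
  x * h (x * a / x) = x * h a.
Proof.
have [->|xn] := eqVneq x 0; first by rewrite !mul0r.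
by rewrite mulrAC divff // mul1r.
Qed.

Lemma two_point (R : realType) (h : R -> R) (l a b : R) :
  \sum_(x : bool) (if x then l else 1 - l) *
     h ((if x then l * a else (1 - l) * b) / (if x then l else 1 - l))
  = l * h a + (1 - l) * h b.
Proof. by rewrite big_bool /= !mul_h_div. Qed.

Lemma bool_dist (R : realType) (l a b : R) :
  0 <= l -> l <= 1 -> 0 <= a -> 0 <= b -> l * a + (1 - l) * b = 1 ->
  [/\ is_dist (fun x : bool => if x then l * a else (1 - l) * b),
      is_dist (fun x : bool => if x then l else 1 - l) &
      abs_cont (fun x : bool => if x then l * a else (1 - l) * b)
               (fun x : bool => if x then l else 1 - l)].
Proof.
move=> l0 l1 a0 b0 e; have l1' : 0 <= 1 - l by rewrite subr_ge0.
split.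
- split; first by case; rewrite mulr_ge0.
  by rewrite big_bool.
- split; first by case.
  by rewrite big_bool /= addrC subrK.
- by case => /= ->; rewrite mul0r.
Qed.

Lemma core (R : realType) (nu : \bar R) (G f : R -> R)
  (nu_gt0 : (0 < nu)%E)
  (G0 : G 0 = 0)
  (G_incr : forall x y, dom0 nu x -> dom0 nu y -> x < y -> G x < G y)
  (G_ge0 : forall x, dom0 nu x -> 0 <= G x)
  (G_onto : forall y, 0 <= y -> exists x, dom0 nu x /\ G x = y)
  (G_conc : forall c, 0 < c -> dom0 nu c ->
     concave_on (dom0 nu) (fun x => Ginv G nu (G x + G c)))
  (f_cvx : convex_on (fun t => 0 <= t) f)
  (f1 : f 1 = 0)
  (Dm_le : (Dm f <= nu)%E)
  (Y : finType) (r t : Y -> R) (phi : R -> R) (c : R) :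
  dom0 nu c -> (forall y, 0 <= r y) -> (forall y, 0 <= t y) ->
  \sum_y r y * t y = 1 -> \sum_y r y = 1 ->
  (forall l a b, 0 <= l -> l <= 1 -> 0 <= a -> 0 <= b -> l * a + (1 - l) * b = 1 ->
     dom0 nu (l * phi a + (1 - l) * phi b) /\
     G (l * phi a + (1 - l) * phi b) <= G (l * f a + (1 - l) * f b) + G c) ->
  dom0 nu (\sum_y r y * phi (t y)) ->
  G (\sum_y r y * phi (t y)) <= G (\sum_y r y * f (t y)) + G c.
Proof.
move=> dc r0 t0 Hrt Hr HP dphi.
have HD2 : forall l a b, 0 <= l -> l <= 1 -> 0 <= a -> 0 <= b ->
    l * a + (1 - l) * b = 1 -> dom0 nu (l * f a + (1 - l) * f b).
  move=> l a b l0 l1 a0 b0 e.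
  have l1' : 0 <= 1 - l by rewrite subr_ge0.
  have := @Df_dom R nu f f_cvx f1 nu_gt0 Dm_le bool
    (fun x => if x then l else 1 - l) (fun x => if x then a else b).
  have e1 : l + (1 - l) = 1 by rewrite addrC subrK.
  rewrite !big_bool /= e1 divr1 e; apply.
  - by case.
  - by case.
  - by [].
have dF : dom0 nu (\sum_y r y * f (t y)).
  have := @Df_dom R nu f f_cvx f1 nu_gt0 Dm_le Y r t r0 t0.
  by rewrite Hr divr1 Hrt; apply.
have Hc := @claim R Y (dom0 nu) f phi (fun x => Ginv G nu (G x + G c))
  (@Psi_conc R nu G G0 G_incr G_ge0 G_onto G_conc c dc).
have := Hc _ HD2 _ r t r0 t0; rewrite Hr Hrt mul1r divr1.
move=> H; apply/(@Psi_conv R nu G G_incr G_ge0 G_onto) => //; apply: H => //.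
- move=> l a b l0 l1 a0 b0 e; have [d1 h] := HP l a b l0 l1 a0 b0 e.
  by apply/(@Psi_conv R nu G G_incr G_ge0 G_onto) => //; apply: HD2.
- move=> r' t' r'0 t'0 e.
  exact: (@Df_dom R nu f f_cvx f1 nu_gt0 Dm_le Y r' t' r'0 t'0 e).
Qed.

Lemma reduce_Y (R : realType) (nu : \bar R) (G f : R -> R)
  (nu_gt0 : (0 < nu)%E)
  (G0 : G 0 = 0)
  (G_incr : forall x y, dom0 nu x -> dom0 nu y -> x < y -> G x < G y)
  (G_ge0 : forall x, dom0 nu x -> 0 <= G x)
  (G_onto : forall y, 0 <= y -> exists x, dom0 nu x /\ G x = y)
  (G_conc : forall c, 0 < c -> dom0 nu c ->
     concave_on (dom0 nu) (fun x => Ginv G nu (G x + G c)))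
  (f_cvx : convex_on (fun t => 0 <= t) f)
  (f1 : f 1 = 0)
  (Dm_le : (Dm f <= nu)%E)
  (Y Z : finType) (qY rY : Y -> R) (qZ rZ : Z -> R) :
  is_dist qY -> is_dist rY -> is_dist qZ -> is_dist rZ ->
  abs_cont qY rY -> abs_cont qZ rZ ->
  (forall qB rB : bool -> R, is_dist qB -> is_dist rB -> abs_cont qB rB ->
     G (Df f (prod_dist qB qZ) (prod_dist rB rZ))
       <= G (Df f qB rB) + G (Df f qZ rZ)) ->
  G (Df f (prod_dist qY qZ) (prod_dist rY rZ))
    <= G (Df f qY rY) + G (Df f qZ rZ).
Proof.
move=> dqY drY dqZ drZ aY aZ HP2.
have Ddom := @Df_dom_dist R nu f f_cvx f1 nu_gt0 Dm_le.
rewrite Df_prod.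
apply: (@core R nu G f nu_gt0 G0 G_incr G_ge0 G_onto G_conc f_cvx f1 Dm_le Y rY
  (fun y => qY y / rY y) (fun s => \sum_z rZ z * f (s * (qZ z / rZ z)))).
- exact: Ddom.
- by case: drY.
- by move=> y; rewrite divr_ge0 //; [case: dqY | case: drY].
- by rewrite sum_rt //; case: dqY.
- by case: drY.
- move=> l a b l0 l1 a0 b0 e.
  have [dqB drB aB] := @bool_dist R l a b l0 l1 a0 b0 e.
  have := HP2 _ _ dqB drB aB.
  have := Ddom _ _ _ (prod_is_dist dqB dqZ) (prod_is_dist drB drZ) (prod_abs aB aZ).
  rewrite Df_prod.
  rewrite (two_point _ (fun s => \sum_z rZ z * f (s * (qZ z / rZ z)))) => dd.
  have eB : Df f (fun x : bool => if x then l * a else (1 - l) * b)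
       (fun x : bool => if x then l else 1 - l) = l * f a + (1 - l) * f b.
    exact: (two_point _ f l a b).
  by rewrite eB => H; split.
- have := Ddom _ _ _ (prod_is_dist dqY dqZ) (prod_is_dist drY drZ) (prod_abs aY aZ).
  by rewrite Df_prod.
Qed.

Lemma reduce_Z (R : realType) (nu : \bar R) (G f : R -> R)
  (nu_gt0 : (0 < nu)%E)
  (G0 : G 0 = 0)
  (G_incr : forall x y, dom0 nu x -> dom0 nu y -> x < y -> G x < G y)
  (G_ge0 : forall x, dom0 nu x -> 0 <= G x)
  (G_onto : forall y, 0 <= y -> exists x, dom0 nu x /\ G x = y)
  (G_conc : forall c, 0 < c -> dom0 nu c ->
     concave_on (dom0 nu) (fun x => Ginv G nu (G x + G c)))
  (f_cvx : convex_on (fun t => 0 <= t) f)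
  (f1 : f 1 = 0)
  (Dm_le : (Dm f <= nu)%E)
  (Y Z : finType) (qY rY : Y -> R) (qZ rZ : Z -> R) :
  is_dist qY -> is_dist rY -> is_dist qZ -> is_dist rZ ->
  abs_cont qY rY -> abs_cont qZ rZ ->
  (forall qB rB : bool -> R, is_dist qB -> is_dist rB -> abs_cont qB rB ->
     G (Df f (prod_dist qY qB) (prod_dist rY rB))
       <= G (Df f qY rY) + G (Df f qB rB)) ->
  G (Df f (prod_dist qY qZ) (prod_dist rY rZ))
    <= G (Df f qY rY) + G (Df f qZ rZ).
Proof.
move=> dqY drY dqZ drZ aY aZ HP2.
have Ddom := @Df_dom_dist R nu f f_cvx f1 nu_gt0 Dm_le.
rewrite Df_prod2 addrC.
apply: (@core R nu G f nu_gt0 G0 G_incr G_ge0 G_onto G_conc f_cvx f1 Dm_le Z rZ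
  (fun z => qZ z / rZ z) (fun s => \sum_y rY y * f (qY y / rY y * s))).
- exact: Ddom.
- by case: drZ.
- by move=> y; rewrite divr_ge0 //; [case: dqZ | case: drZ].
- by rewrite sum_rt //; case: dqZ.
- by case: drZ.
- move=> l a b l0 l1 a0 b0 e.
  have [dqB drB aB] := @bool_dist R l a b l0 l1 a0 b0 e.
  have := HP2 _ _ dqB drB aB.
  have := Ddom _ _ _ (prod_is_dist dqY dqB) (prod_is_dist drY drB) (prod_abs aY aB).
  rewrite Df_prod2.
  rewrite (two_point _ (fun s => \sum_y rY y * f (qY y / rY y * s))) => dd.
  have eB : Df f (fun x : bool => if x then l * a else (1 - l) * b)
       (fun x : bool => if x then l else 1 - l) = l * f a + (1 - l) * f b.
    exact: (two_point _ f l a b).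
  by rewrite eB => H; split => //; rewrite [G _ + G _]addrC.
- have := Ddom _ _ _ (prod_is_dist dqY dqZ) (prod_is_dist drY drZ) (prod_abs aY aZ).
  by rewrite Df_prod2.
Qed.

Unset Implicit Arguments.
Local Close Scope classical_set_scope.

Theorem lemma5 (R : realType) (nu : \bar R) (G f : R -> R)
  (nu_gt0 : (0 < nu)%E)
  (G0 : G 0 = 0)
  (G_incr : forall x y, dom0 nu x -> dom0 nu y -> x < y -> G x < G y)
  (G_ge0 : forall x, dom0 nu x -> 0 <= G x)
  (G_onto : forall y, 0 <= y -> exists x, dom0 nu x /\ G x = y)
  (G_conc : forall c, 0 < c -> dom0 nu c ->
     concave_on (dom0 nu) (fun x => Ginv G nu (G x + G c)))
  (f_cvx : convex_on (fun t => 0 <= t) f)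
  (f1 : f 1 = 0)
  (Dm_le : (Dm f <= nu)%E)
  (H2 : forall (Y Z : finType), #|Y| = 2%N -> #|Z| = 2%N ->
     forall (qY rY : Y -> R) (qZ rZ : Z -> R),
       is_dist qY -> is_dist rY -> is_dist qZ -> is_dist rZ ->
       abs_cont qY rY -> abs_cont qZ rZ ->
       G (Df f (prod_dist qY qZ) (prod_dist rY rZ))
         <= G (Df f qY rY) + G (Df f qZ rZ)) :
  forall (Y Z : finType) (qY rY : Y -> R) (qZ rZ : Z -> R),
    is_dist qY -> is_dist rY -> is_dist qZ -> is_dist rZ ->
    abs_cont qY rY -> abs_cont qZ rZ ->
    G (Df f (prod_dist qY qZ) (prod_dist rY rZ))
      <= G (Df f qY rY) + G (Df f qZ rZ).
Proof.
have step1 : forall (Y : finType) (qY rY : Y -> R) (qZ rZ : bool -> R),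
    is_dist qY -> is_dist rY -> is_dist qZ -> is_dist rZ ->
    abs_cont qY rY -> abs_cont qZ rZ ->
    G (Df f (prod_dist qY qZ) (prod_dist rY rZ))
      <= G (Df f qY rY) + G (Df f qZ rZ).
  move=> Y qY rY qZ rZ dqY drY dqZ drZ aY aZ.
  apply: (@reduce_Y R nu G f nu_gt0 G0 G_incr G_ge0 G_onto G_conc f_cvx f1 Dm_le)
    => // qB rB dqB drB aB.
  by apply: H2 => //; rewrite card_bool.
move=> Y Z qY rY qZ rZ dqY drY dqZ drZ aY aZ.
apply: (@reduce_Z R nu G f nu_gt0 G0 G_incr G_ge0 G_onto G_conc f_cvx f1 Dm_le)
  => // qB rB dqB drB aB.
exact: step1.
Qed.
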